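(* Let $R$ be a commutative ring. If every countable direct sum of Gorenstein injective $R$-modules is Gorenstein injective, then $R$ is Noetherian.
   Context: A complex is acyclic if all its homology vanishes. An $R$-module $B$ is Gorenstein injective if there exists an acyclic complex $I^\bullet$ of injective $R$-modules with $\ker(I^0\to I^1)\cong B$ such that $\operatorname{Hom}_R(E,I^\bullet)$ is acyclic for every injective $R$-module $E$. *)

(* Defs.v *)
From HB Require Import structures.
From mathcomp Require Import all_boot all_order all_algebra.
Set Implicit Arguments. Unset Strict Implicit. Unset Printing Implicit Defensive.
Import Order.TTheory GRing.Theory Num.Theory.
Local Open Scope ring_scope.

Section Defs.
Variable R : comPzRingType.

Definition injective_module (E : lmodType R) : Prop :=
  forall (A B : lmodType R) (i : {linear A -> B}) (f : {linear A -> E}),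
    injective i -> exists g : {linear B -> E}, forall a, g (i a) = f a.

Definition is_complex (I : int -> lmodType R)
  (d : forall n : int, {linear I n -> I (n + 1)}) : Prop :=
  forall (n : int) (x : I n), d (n + 1) (d n x) = 0.

Definition acyclic_complex (I : int -> lmodType R)
  (d : forall n : int, {linear I n -> I (n + 1)}) : Prop :=
  is_complex d /\
  forall (n : int) (x : I (n + 1)), d (n + 1) x = 0 ->
    exists y : I n, d n y = x.

(* Hom_R(E, I^.) is acyclic (it is automatically a complex when I^. is):
   every f : E -> I^(n+1) with d o f = 0 factors as d o g. *)
Definition Hom_acyclic (E : lmodType R) (I : int -> lmodType R)
  (d : forall n : int, {linear I n -> I (n + 1)}) : Prop :=
  forall (n : int) (f : {linear E -> I (n + 1)}),
    (forall e, d (n + 1) (f e) = 0) ->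
    exists g : {linear E -> I n}, forall e, d n (g e) = f e.

Definition iso_to_ker0 (B : lmodType R) (I : int -> lmodType R)
  (d : forall n : int, {linear I n -> I (n + 1)}) : Prop :=
  exists phi : {linear B -> I 0},
    injective phi /\
    forall y : I 0, d 0 y = 0 <-> exists b : B, phi b = y.

Definition Gorenstein_injective (B : lmodType R) : Prop :=
  exists (I : int -> lmodType R) (d : forall n : int, {linear I n -> I (n + 1)}),
    (forall n, injective_module (I n)) /\
    acyclic_complex d /\
    iso_to_ker0 B d /\
    (forall E : lmodType R, injective_module E -> Hom_acyclic E d).

Definition is_direct_sum (M : nat -> lmodType R) (D : lmodType R)
  (iota : forall n, {linear M n -> D}) : Prop :=
  (forall x : D, exists (N : nat) (m : forall i, M i),
      x = \sum_(i < N) iota i (m i)) /\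
  (forall (N : nat) (m : forall i, M i),
      \sum_(i < N) iota i (m i) = 0 -> forall i : nat, (i < N)%N -> m i = 0).

Definition is_ideal (J : R -> Prop) : Prop :=
  J 0 /\ (forall x y, J x -> J y -> J (x + y)) /\ (forall r x, J x -> J (r * x)).

Definition noetherian_ring : Prop :=
  forall J : R -> Prop, is_ideal J ->
    exists s : seq R, forall x, J x <->
      exists c : seq R, size c = size s /\ x = \sum_(i < size s) c`_i * s`_i.

End Defs.

(* Main.v *)
Require Import Defs.
From HB Require Import structures.
From mathcomp Require Import all_boot all_order all_algebra all_field.
From Stdlib Require Import Classical ClassicalEpsilon FunctionalExtensionality PropExtensionality ProofIrrelevance.
Set Implicit Arguments. Unset Strict Implicit. Unset Printing Implicit Defensive.
Import Order.TTheory GRing.Theory Num.Theory.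
Local Open Scope ring_scope.

Definition cl_eq {T : Type} (x y : T) : bool :=
  if excluded_middle_informative (x = y) then true else false.
Lemma cl_eqP (T : Type) : Equality.axiom (@cl_eq T).
Proof.
move=> x y; rewrite /cl_eq; case: excluded_middle_informative => h.
  by apply: ReflectT. by apply: ReflectF.
Qed.
Definition cl_find {T : Type} (P : pred T) (n : nat) : option T :=
  match excluded_middle_informative (exists x, P x) with
  | left H => Some (proj1_sig (constructive_indefinite_description _ H))
  | right _ => None end.
Lemma cl_find1 T (P : pred T) n x : cl_find P n = Some x -> P x.
Proof.
rewrite /cl_find; case: excluded_middle_informative => // H [<-].
exact: proj2_sig (constructive_indefinite_description _ H).
Qed.
Lemma cl_find2 T (P : pred T) : (exists x, P x) -> exists n, cl_find P n.
Proof.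
move=> H; exists 0%N; rewrite /cl_find; case: excluded_middle_informative => //.
Qed.
Lemma cl_find3 T (P Q : pred T) : P =1 Q -> cl_find P =1 cl_find Q.
Proof. by move=> h; have -> : P = Q by apply: functional_extensionality. Qed.

Definition QZ := {z : algC | z != 0}.
HB.instance Definition _ := hasDecEq.Build QZ (@cl_eqP QZ).
HB.instance Definition _ := hasChoice.Build QZ (@cl_find1 QZ) (@cl_find2 QZ) (@cl_find3 QZ).
Definition mkQZ (z : algC) (h : z != 0) : QZ := exist (fun z : algC => z != 0) z h.
Definition qz1 : QZ := mkQZ (oner_neq0 _).
Definition qzmul (a b : QZ) : QZ := mkQZ (z:=val a * val b) (mulf_neq0 (valP a) (valP b)).
Definition qzinv (a : QZ) : QZ := mkQZ (z:=(val a)^-1) (invr_neq0 (valP a)).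
Lemma qzE (a b : QZ) : val a = val b -> a = b.
Proof. by case: a b => a ha [b hb] /= e; subst; rewrite (proof_irrelevance _ ha hb). Qed.
Lemma qz_addA : associative qzmul. Proof. by move=> a b c; apply: qzE; rewrite /= mulrA. Qed.
Lemma qz_addC : commutative qzmul. Proof. by move=> a b; apply: qzE; rewrite /= mulrC. Qed.
Lemma qz_add0 : left_id qz1 qzmul. Proof. by move=> a; apply: qzE; rewrite /= mul1r. Qed.
Lemma qz_addN : left_inverse qz1 qzinv qzmul.
Proof. by move=> a; apply: qzE; rewrite /= mulVf // (valP a). Qed.
HB.instance Definition _ := GRing.isZmodule.Build QZ qz_addA qz_addC qz_add0 qz_addN.

Lemma qz_valMn (a : QZ) (n : nat) : val (a *+ n) = val a ^+ n.
Proof.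
elim: n => [|n IH]; first by rewrite mulr0n expr0.
by rewrite mulrS exprS -IH.
Qed.

Lemma qz_div (m : nat) (v : QZ) : (0 < m)%N -> exists q : QZ, q *+ m = v.
Proof.
move=> m0.
have nz : m.-root (val v) != 0 by rewrite rootC_eq0 // (valP v).
exists (mkQZ nz); apply: qzE; by rewrite qz_valMn /= rootCK.
Qed.

Lemma qz_tors (m : nat) : (1 < m)%N -> exists q : QZ, q != 0 /\ q *+ m = 0.
Proof.
move=> m1.
have m0 : (0 < m)%N by apply: ltn_trans m1.
have [z zp] := C_prim_root_exists m0.
have z0 : z != 0.
  apply/negP=> /eqP z0; move: (prim_expr_order zp); rewrite z0 expr0n.
  by rewrite -(prednK m0) /= => /eqP; rewrite eq_sym oner_eq0.
exists (mkQZ z0); split.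
  apply/negP=> /eqP/(congr1 val) /= h.
  by move: (prim_order_dvd zp 1); rewrite expr1 h eqxx dvdn1 => /eqP e; rewrite e in m1.
by apply: qzE; rewrite qz_valMn /= (prim_expr_order zp).
Qed.

Section Tower.
Variable U : Type.
Variable X0 : U -> Prop.
Variable g : (U -> Prop) -> (U -> Prop).
Hypothesis g_infl : forall X u, X u -> g X u.
Definition tsub (X Y : U -> Prop) := forall u, X u -> Y u.
Definition bigU (C : (U -> Prop) -> Prop) : U -> Prop :=
  fun u => X0 u \/ exists X, C X /\ X u.
Inductive TW : (U -> Prop) -> Prop :=
| TW_succ X : TW X -> TW (g X)
| TW_union C : (forall X, C X -> TW X) -> TW (bigU C).

Lemma tsub_trans X Y Z : tsub X Y -> tsub Y Z -> tsub X Z.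
Proof. by move=> h1 h2 u /h1 /h2. Qed.
Lemma tsub_g X : tsub X (g X). Proof. exact: g_infl. Qed.
Lemma tsub_antisym X Y : tsub X Y -> tsub Y X -> X = Y.
Proof.
move=> h1 h2; apply: functional_extensionality => u.
by apply: propositional_extensionality; split; [apply: h1|apply: h2].
Qed.

Lemma TW_X0 X : TW X -> tsub X0 X.
Proof.
elim=> [Y _ IH | C _ _] u h; first by apply: g_infl; apply: IH.
by left.
Qed.

Lemma tw_aux c1 c2 : TW c1 -> TW c2 ->
  (forall c3, TW c3 -> tsub c3 c2 -> c2 = c3 \/ tsub (g c3) c2) ->
  tsub (g c2) c1 \/ tsub c1 c2.
Proof.
move=> hc1 hc2 h; elim: hc1 => [c3 hc3 [ih|ih] | C hC ih].
- by left; apply: tsub_trans ih (@tsub_g _).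
- by case: (h c3 hc3 ih) => [->|h']; [left|right].
- case: (classic (tsub (g c2) (bigU C))) => [H|H]; first by left.
  right=> u [hu|[X [CX Xu]]]; first exact: TW_X0 hc2 _ hu.
  case: (ih X CX) => [h'|h']; last exact: h'.
  by exfalso; apply: H => v /h' hv; right; exists X.
Qed.

Lemma tw_succ_total c2 : TW c2 -> forall c1, TW c1 -> tsub c1 c2 ->
  c2 = c1 \/ tsub (g c1) c2.
Proof.
elim=> [c2' hc2' ih | C hC ih] c1 hc1 h.
- case: (tw_aux hc1 hc2' ih) => [hA|hB].
    by left; apply: tsub_antisym.
  case: (ih c1 hc1 hB) => [e|h'].
    by right; rewrite e => u.
  by right; apply: tsub_trans h' (@tsub_g _).
- case: (classic (tsub (g c1) (bigU C))) => [H|H]; first by right.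
  left; apply: tsub_antisym => //.
  move=> u [hu|[X [CX Xu]]]; first exact: TW_X0 hc1 _ hu.
  case: (tw_aux hc1 (hC X CX) (ih X CX)) => [h'|h'].
    by apply: h'; apply: g_infl.
  case: (ih X CX c1 hc1 h') => [e|h''].
    by rewrite -e.
  by exfalso; apply: H => v /h'' hv; right; exists X.
Qed.

Lemma tw_total c1 c2 : TW c1 -> TW c2 -> tsub c1 c2 \/ tsub c2 c1.
Proof.
move=> h1 h2; case: (tw_aux h2 h1 (fun c3 h3 s => tw_succ_total h1 h3 s)) => h.
  by left; apply: tsub_trans (@tsub_g _) h.
by right.
Qed.

Lemma tw_max : exists M, TW M /\ tsub (g M) M.
Proof.
have hM : TW (bigU TW) by apply: TW_union.
exists (bigU TW); split => // u hu; right; exists (g (bigU TW)); split => //.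
exact: TW_succ.
Qed.
End Tower.

Lemma ex_min_nat (P : nat -> Prop) : (exists n, P n) ->
  exists m, P m /\ forall n, (n < m)%N -> ~ P n.
Proof.
move=> [n Pn]; elim: n {-2}n (leqnn n) Pn => [|N IH] n hn Pn.
  exists n; split=> // k; move: hn; rewrite leqn0 => /eqP ->; by [].
case: (classic (exists k, (k < n)%N /\ P k)) => [[k [hk Pk]]|H].
  by apply: (IH k) => //; rewrite -ltnS; apply: leq_trans hk hn.
by exists n; split=> // k hk Pk; apply: H; exists k.
Qed.

Section Ext.
Variables (B V : zmodType).
Hypothesis Vdiv : forall (m : nat) (v : V), (0 < m)%N -> exists q : V, q *+ m = v.
Notation U := (B * V)%type.

Definition good (P : U -> Prop) :=
  [/\ (forall x u v, P (x, u) -> P (x, v) -> u = v), P (0, 0) &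
      (forall x y u v, P (x, u) -> P (y, v) -> P (x - y, u - v))].

Section Good.
Variable P : U -> Prop.
Hypothesis gP : good P.
Lemma g_fun x u v : P (x, u) -> P (x, v) -> u = v. Proof. by case: gP => h _ _; apply: h. Qed.
Lemma g_0 : P (0, 0). Proof. by case: gP. Qed.
Lemma g_sub x y u v : P (x, u) -> P (y, v) -> P (x - y, u - v). Proof. by case: gP => _ _ h; apply: h. Qed.
Lemma g_opp x u : P (x, u) -> P (- x, - u).
Proof. by move=> h; have := g_sub g_0 h; rewrite !sub0r. Qed.
Lemma g_add x y u v : P (x, u) -> P (y, v) -> P (x + y, u + v).
Proof. by move=> h1 /g_opp h2; have := g_sub h1 h2; rewrite !opprK. Qed.
Lemma g_muln x u n : P (x, u) -> P (x *+ n, u *+ n).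
Proof.
move=> h; elim: n => [|n IH]; first by rewrite !mulr0n; apply: g_0.
by rewrite !mulrS; apply: g_add.
Qed.
Lemma g_mulz x u (k : int) : P (x, u) -> P (x *~ k, u *~ k).
Proof.
move=> h; case: k => n; first by rewrite -!pmulrn; apply: g_muln.
by rewrite NegzE !mulrNz -!pmulrn; apply/g_opp/g_muln.
Qed.
End Good.

Definition ext (P : U -> Prop) (b : B) (q : V) : U -> Prop :=
  fun p => exists s u (k : int), P (s, u) /\ p.1 = s + b *~ k /\ p.2 = u + q *~ k.
Definition compat (P : U -> Prop) (b : B) (q : V) :=
  forall (k : int) v, P (b *~ k, v) -> v = q *~ k.

Lemma ext_sub P b q : tsub P (ext P b q).
Proof. by move=> [x u] h; exists x, u, 0; rewrite !mulr0z !addr0. Qed.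

Lemma ext_b P b q : good P -> ext P b q (b, q).
Proof. by move=> gP; exists 0, 0, 1; rewrite !add0r !mulr1z; split => //; apply: g_0. Qed.

Lemma ext_good P b q : good P -> compat P b q -> good (ext P b q).
Proof.
move=> gP cP; split.
- move=> x u1 u2 [s [u [k [h1 [/= e1 e2]]]]] [s' [u' [k' [h2 [/= e1' e2']]]]].
  have hx : s + b *~ k = s' + b *~ k' by rewrite -e1 -e1'.
  have e : s - s' = b *~ (k' - k).
    have -> : s = s' + b *~ k' - b *~ k by rewrite -hx addrK.
    by rewrite mulrzBr addrAC [s' + _]addrC addrK.
  have := g_sub gP h1 h2; rewrite e => /cP; rewrite mulrzBr => e3.
  rewrite e2 e2'; apply/eqP; rewrite -subr_eq0 opprD addrACA e3.
  by rewrite addrA subrK subrr.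
- by exists 0, 0, 0; rewrite !mulr0z !addr0; split => //; apply: g_0.
- move=> x y u v [s [u1 [k [h1 [/= e1 e2]]]]] [s' [u' [k' [h2 [/= e1' e2']]]]].
  exists (s - s'), (u1 - u'), (k - k'); split; first exact: g_sub.
  by rewrite /= e1 e1' e2 e2'; split; rewrite mulrzBr opprD addrACA.
Qed.

Lemma exq P b : good P -> exists q, compat P b q.
Proof.
move=> gP.
have key : forall (k : int) v, P (b *~ k, v) -> exists w, P (b *+ `|k|%N, w).
  move=> [] n v h; first by exists v; rewrite pmulrn.
  exists (- v); move: (g_opp gP h); rewrite NegzE mulrNz opprK /=.
  by rewrite -pmulrn.
case: (classic (exists n : nat, (0 < n)%N /\ exists w, P (b *+ n, w))) => [H|H].
- have [m [[m0 [vm hm]] hmin]] := ex_min_nat H.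
  have [q hq] := Vdiv vm m0.
  exists q => k v h.
  have mz : (m%:Z != 0) by rewrite eqz_nat -lt0n.
  set j := (k %/ m)%Z; set r := (k %% m)%Z.
  have ek : k = j * m + r by apply: divz_eq.
  have hjm : P (b *~ (j * m), vm *~ j) by rewrite mulrC mulrzA -pmulrn; apply: g_mulz.
  have hr : P (b *~ r, v - vm *~ j).
    have := g_sub gP h hjm; by rewrite {1}ek mulrzDr addrAC subrr add0r.
  have r0 : r = 0.
    have rge : 0 <= r by apply: modz_ge0.
    have rlt : r < m by apply: ltz_pmod; rewrite ltz_nat.
    case: (posnP `|r|%N) => [/eqP|rp].
      by rewrite absz_eq0 => /eqP.
    exfalso; apply: (hmin `|r|%N).
      by rewrite -ltz_nat gez0_abs.
    split => //; by have [w hw] := key _ _ hr; exists w.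
  move: ek; rewrite r0 addr0 => ek.
  have := g_fun gP h; rewrite ek => /(_ _ hjm) ->.
  by rewrite -hq pmulrn -mulrzA mulrC.
- exists 0 => k v h.
  have [w hw] := key _ _ h.
  case: (posnP `|k|%N) => [/eqP|kp].
    rewrite absz_eq0 => /eqP k0; move: h; rewrite k0 !mulr0z => h.
    by apply: (g_fun gP h); apply: g_0.
  by exfalso; apply: H; exists `|k|%N; split => //; exists w.
Qed.

Definition gstep (P : U -> Prop) : U -> Prop :=
  match excluded_middle_informative (good P /\ exists b, ~ exists v, P (b, v)) with
  | left H =>
      let b := proj1_sig (constructive_indefinite_description _ (proj2 H)) in
      let q := proj1_sig (constructive_indefinite_description _ (exq b (proj1 H))) in
      ext P b q
  | right _ => P end.

Lemma gstep_infl P u : P u -> gstep P u.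
Proof. rewrite /gstep; case: excluded_middle_informative => // H; exact: ext_sub. Qed.

Lemma gstep_good P : good P -> good (gstep P).
Proof.
move=> gP; rewrite /gstep; case: excluded_middle_informative => // H.
apply: ext_good => //; exact: proj2_sig (constructive_indefinite_description _ _).
Qed.

Lemma gstep_total P : good P -> tsub (gstep P) P -> forall b, exists v, P (b, v).
Proof.
move=> gP hs b; apply: NNPP => nb.
have H : good P /\ exists b, ~ exists v, P (b, v) by split => //; exists b.
move: hs; rewrite /gstep; case: excluded_middle_informative => // H'.
case: (constructive_indefinite_description _ (proj2 H')) => b' nb' /= hs.
apply: nb'; eexists; apply: hs; exact: ext_b.
Qed.

Lemma union_good X0 C : good X0 -> (forall X, C X -> good X /\ tsub X0 X) ->
  (forall X Y, C X -> C Y -> tsub X Y \/ tsub Y X) -> good (bigU X0 C).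
Proof.
move=> g0 hC hch.
have key : forall p1 p2, bigU X0 C p1 -> bigU X0 C p2 ->
    exists Z, [/\ good Z, Z p1, Z p2 & tsub Z (bigU X0 C)].
  move=> p1 p2 [h1|[X [CX h1]]] [h2|[Y [CY h2]]].
  - by exists X0; split => // u hu; left.
  - exists Y; have [gY sY] := hC Y CY; split => //; first by apply: sY.
    by move=> u hu; right; exists Y.
  - exists X; have [gX sX] := hC X CX; split => //; first by apply: sX.
    by move=> u hu; right; exists X.
  - case: (hch X Y CX CY) => s.
      exists Y; have [gY sY] := hC Y CY; split => //; first by apply: s.
      by move=> u hu; right; exists Y.
    exists X; have [gX sX] := hC X CX; split => //; first by apply: s.
    by move=> u hu; right; exists X.
split.
- move=> x u v h1 h2; have [Z [gZ z1 z2 _]] := key _ _ h1 h2; exact: (@g_fun Z gZ x u v z1 z2).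
- by left; apply: g_0.
- move=> x y u v h1 h2; have [Z [gZ z1 z2 sZ]] := key _ _ h1 h2; apply: sZ; exact: g_sub.
Qed.

Theorem extension (X0 : U -> Prop) : good X0 ->
  exists F : B -> V, (forall x y, F (x + y) = F x + F y) /\
                     (forall x u, X0 (x, u) -> F x = u).
Proof.
move=> g0.
have TWgood : forall X, TW X0 gstep X -> good X.
  move=> X; elim => [Y _ IH | C hC IH]; first exact: gstep_good.
  apply: union_good => //.
    by move=> Z CZ; split; [apply: IH|apply: (TW_X0 (@gstep_infl) (hC Z CZ))].
  by move=> Z Y CZ CY; exact: (tw_total (@gstep_infl) (hC Z CZ) (hC Y CY)).
have [M [TM sM]] := tw_max X0 gstep.
have gM := TWgood _ TM.
have tot := gstep_total gM sM.
pose F b := proj1_sig (constructive_indefinite_description _ (tot b)).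
have FP : forall b, M (b, F b) by move=> b; exact: (proj2_sig (constructive_indefinite_description _ (tot b))).
exists F; split.
- by move=> x y; apply: (g_fun gM (FP _)); apply: g_add.
- move=> x u h; apply: (g_fun gM (FP _)); exact: (TW_X0 (@gstep_infl) TM h).
Qed.
End Ext.

Definition mkLin (R : comPzRingType) (U W : lmodType R) (h : U -> W)
  (H : linear h) : {linear U -> W} :=
  HB.pack h (GRing.isLinear.Build R U W *:%R h H).
Lemma mkLinE (R : comPzRingType) (U W : lmodType R) (h : U -> W) (H : linear h) x :
  mkLin H x = h x.
Proof. by []. Qed.

Section HomMod.
Variables (R : comPzRingType) (V : zmodType).
Definition Hz := {f : R -> V | forall x y, f (x + y) = f x + f y}.
HB.instance Definition _ := hasDecEq.Build Hz (@cl_eqP Hz).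
HB.instance Definition _ := hasChoice.Build Hz (@cl_find1 Hz) (@cl_find2 Hz) (@cl_find3 Hz).
Definition mkHz (f : R -> V) (h : forall x y, f (x + y) = f x + f y) : Hz :=
  exist (fun f : R -> V => forall x y, f (x + y) = f x + f y) f h.
Lemma Hz_eq (f g : Hz) : (forall s, proj1_sig f s = proj1_sig g s) -> f = g.
Proof.
case: f g => f hf [g hg] /= e.
have fg : f = g by apply: functional_extensionality.
subst; by rewrite (proof_irrelevance _ hf hg).
Qed.
Lemma Hz_add (f : Hz) x y : proj1_sig f (x + y) = proj1_sig f x + proj1_sig f y. Proof. exact: (proj2_sig f). Qed.
Lemma Hz_0 (f : Hz) : proj1_sig f 0 = 0.
Proof. by apply: (addrI (proj1_sig f 0)); rewrite -Hz_add !addr0. Qed.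
Lemma Hz_opp (f : Hz) x : proj1_sig f (- x) = - proj1_sig f x.
Proof. by apply: (addrI (proj1_sig f x)); rewrite -Hz_add !subrr Hz_0. Qed.

Definition hz0 : Hz := @mkHz (fun _ => 0) (fun _ _ => esym (addr0 0)).
Definition hzadd (f g : Hz) : Hz :=
  @mkHz (fun s => proj1_sig f s + proj1_sig g s) (fun x y => etrans (congr2 +%R (Hz_add f x y) (Hz_add g x y)) (addrACA _ _ _ _)).
Definition hzopp (f : Hz) : Hz :=
  @mkHz (fun s => - proj1_sig f s) (fun x y => etrans (congr1 -%R (Hz_add f x y)) (opprD _ _)).
Lemma hz_addA : associative hzadd. Proof. by move=> a b c; apply: Hz_eq => s /=; rewrite addrA. Qed.
Lemma hz_addC : commutative hzadd. Proof. by move=> a b; apply: Hz_eq => s /=; rewrite addrC. Qed.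
Lemma hz_add0 : left_id hz0 hzadd. Proof. by move=> a; apply: Hz_eq => s /=; rewrite add0r. Qed.
Lemma hz_addN : left_inverse hz0 hzopp hzadd. Proof. by move=> a; apply: Hz_eq => s /=; rewrite addNr. Qed.
HB.instance Definition _ := GRing.isZmodule.Build Hz hz_addA hz_addC hz_add0 hz_addN.

Definition hzscale (r : R) (f : Hz) : Hz :=
  @mkHz (fun s => proj1_sig f (s * r)) (fun x y => etrans (congr1 (proj1_sig f) (mulrDl x y r)) (Hz_add f _ _)).
Lemma hz_scalerA a b v : hzscale a (hzscale b v) = hzscale (a * b) v.
Proof. by apply: Hz_eq => s /=; rewrite mulrA. Qed.
Lemma hz_scale1r : left_id 1 hzscale. Proof. by move=> v; apply: Hz_eq => s /=; rewrite mulr1. Qed.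
Lemma hz_scalerDr : right_distributive hzscale +%R.
Proof. by move=> a u v; apply: Hz_eq => s /=. Qed.
Lemma hz_scalerDl v : {morph hzscale^~ v: a b / a + b}.
Proof. by move=> a b; apply: Hz_eq => s /=; rewrite mulrDr Hz_add. Qed.
HB.instance Definition _ := GRing.Zmodule_isLmodule.Build R Hz hz_scalerA hz_scale1r hz_scalerDr hz_scalerDl.

Lemma Hz_valD (f g : Hz) s : proj1_sig (f + g) s = proj1_sig f s + proj1_sig g s. Proof. by []. Qed.
Lemma Hz_valN (f : Hz) s : proj1_sig (- f) s = - proj1_sig f s. Proof. by []. Qed.
Lemma Hz_val0 s : proj1_sig (0 : Hz) s = 0. Proof. by []. Qed.
Lemma Hz_valZ r (f : Hz) s : proj1_sig (r *: f) s = proj1_sig f (s * r). Proof. by []. Qed.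
Lemma Hz_valB (f g : Hz) s : proj1_sig (f - g) s = proj1_sig f s - proj1_sig g s. Proof. by []. Qed.

Hypothesis Vext : forall (B : zmodType) (X0 : B * V -> Prop), good X0 ->
  exists F : B -> V, (forall x y, F (x + y) = F x + F y) /\
                     (forall x u, X0 (x, u) -> F x = u).

Lemma Hz_injective : injective_module Hz.
Proof.
move=> A B i f iinj.
pose X0 := fun p : B * V => exists a, p.1 = i a /\ p.2 = proj1_sig (f a) 1.
have gX0 : good X0.
  split.
  - move=> x u v [a [/= e1 e2]] [a' [/= e1' e2']].
    by rewrite e2 e2'; have -> : a = a' by apply: iinj; rewrite -e1 -e1'.
  - by exists 0; rewrite /= !linear0.
  - move=> x y u v [a [/= e1 e2]] [a' [/= e1' e2']]; exists (a - a').
    by rewrite /= !linearB e1 e1' e2 e2' Hz_valB.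
have [F [Fadd FX]] := Vext gX0.
have Fadd' : forall b x y, F ((x + y) *: b) = F (x *: b) + F (y *: b).
  by move=> b x y; rewrite scalerDl Fadd.
pose g b := @mkHz (fun s => F (s *: b)) (Fadd' b).
have glin : linear g.
  move=> r x y; apply: Hz_eq => s /=.
  by rewrite scalerDr Fadd scalerA.
exists (mkLin glin) => a; apply: Hz_eq => s; rewrite mkLinE /=.
rewrite -linearZ (FX _ (proj1_sig (f (s *: a)) 1)); last by exists (s *: a).
have -> : f (s *: a) = s *: f a by apply: linearZ.
by rewrite Hz_valZ mul1r.
Qed.
End HomMod.

Section Prod.
Variable R : comPzRingType.

Lemma pairLE (E1 E2 : lmodType R) r (a : E1) (b : E2) c d :
  r *: (a, b) + (c, d) = (r *: a + c, r *: b + d).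
Proof. by []. Qed.

Lemma prod_inj (E1 E2 : lmodType R) : injective_module E1 -> injective_module E2 ->
  injective_module (E1 * E2)%type.
Proof.
move=> h1 h2 A B i f iinj.
have l1 : linear (fun a => (f a).1) by move=> r x y; rewrite linearP.
have l2 : linear (fun a => (f a).2) by move=> r x y; rewrite linearP.
have [g1 hg1] := h1 A B i (mkLin l1) iinj.
have [g2 hg2] := h2 A B i (mkLin l2) iinj.
have lg : linear (fun b => (g1 b, g2 b)) by move=> r x y; rewrite !linearP.
exists (mkLin lg) => a; rewrite mkLinE hg1 hg2 !mkLinE.
by case: (f a).
Qed.

Lemma inj_GI (E : lmodType R) : injective_module E -> Gorenstein_injective E.
Proof.
move=> hE.
pose X := (E * E)%type.
have dl : linear (fun p : X => ((0 : E), p.1)) by move=> r x y /=; rewrite pairLE scaler0 addr0.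
pose d0 := mkLin dl.
exists (fun _ => X), (fun _ => d0); split; [|split; [|split]].
- by move=> n; apply: prod_inj.
- split.
    by move=> n x.
  move=> n [x1 x2] /= h.
  exists (x2, 0); case: h => -> .
  by [].
- have pl : linear (fun e : E => ((0 : E), e)) by move=> r x y /=; rewrite pairLE scaler0 addr0.
  exists (mkLin pl); split.
    by move=> x y; rewrite !mkLinE => -[].
  move=> [y1 y2]; rewrite !mkLinE /=; split.
    by case=> ->; exists y2.
  by case=> b [<- _].
- move=> E' hE' n f hf.
  have gl : linear (fun e => ((f e).2, (0 : E))) by move=> r x y /=; rewrite linearP pairLE scaler0 addr0.
  exists (mkLin gl) => e; rewrite !mkLinE /=.
  move: (hf e); rewrite mkLinE /=; case: (f e) => a b /= [->].
  by [].
Qed.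
End Prod.

Section DS.
Variables (R : comPzRingType) (M : lmodType R).
Definition fsupp (h : nat -> M) := exists N, forall n, (N <= n)%N -> h n = 0.
Definition DS := {h : nat -> M | fsupp h}.
HB.instance Definition _ := hasDecEq.Build DS (@cl_eqP DS).
HB.instance Definition _ := hasChoice.Build DS (@cl_find1 DS) (@cl_find2 DS) (@cl_find3 DS).
Definition mkDS (h : nat -> M) (p : fsupp h) : DS := exist fsupp h p.
Lemma DS_eq (f g : DS) : (forall s, proj1_sig f s = proj1_sig g s) -> f = g.
Proof.
case: f g => f hf [g hg] /= e.
have fg : f = g by apply: functional_extensionality.
subst; by rewrite (proof_irrelevance _ hf hg).
Qed.

Lemma fs0 : fsupp (fun _ => 0). Proof. by exists 0%N. Qed.
Lemma fsD (f g : DS) : fsupp (fun n => proj1_sig f n + proj1_sig g n).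
Proof.
case: f g => f [N hf] [g [N' hg]] /=; exists (maxn N N') => n h.
by rewrite hf ?hg ?addr0 //; [apply: leq_trans h; apply: leq_maxr|apply: leq_trans h; apply: leq_maxl].
Qed.
Lemma fsN (f : DS) : fsupp (fun n => - proj1_sig f n).
Proof. by case: f => f [N hf] /=; exists N => n h; rewrite hf ?oppr0. Qed.
Lemma fsZ r (f : DS) : fsupp (fun n => r *: proj1_sig f n).
Proof. by case: f => f [N hf] /=; exists N => n h; rewrite hf ?scaler0. Qed.

Definition ds0 : DS := mkDS fs0.
Definition dsadd (f g : DS) : DS := mkDS (fsD f g).
Definition dsopp (f : DS) : DS := mkDS (fsN f).
Lemma ds_addA : associative dsadd. Proof. by move=> a b c; apply: DS_eq => s /=; rewrite addrA. Qed.
Lemma ds_addC : commutative dsadd. Proof. by move=> a b; apply: DS_eq => s /=; rewrite addrC. Qed.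
Lemma ds_add0 : left_id ds0 dsadd. Proof. by move=> a; apply: DS_eq => s /=; rewrite add0r. Qed.
Lemma ds_addN : left_inverse ds0 dsopp dsadd. Proof. by move=> a; apply: DS_eq => s /=; rewrite addNr. Qed.
HB.instance Definition _ := GRing.isZmodule.Build DS ds_addA ds_addC ds_add0 ds_addN.
Definition dsscale r (f : DS) : DS := mkDS (fsZ r f).
Lemma ds_scalerA a b v : dsscale a (dsscale b v) = dsscale (a * b) v.
Proof. by apply: DS_eq => s /=; rewrite scalerA. Qed.
Lemma ds_scale1r : left_id 1 dsscale. Proof. by move=> v; apply: DS_eq => s /=; rewrite scale1r. Qed.
Lemma ds_scalerDr : right_distributive dsscale +%R.
Proof. by move=> a u v; apply: DS_eq => s /=; rewrite scalerDr. Qed.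
Lemma ds_scalerDl v : {morph dsscale^~ v: a b / a + b}.
Proof. by move=> a b; apply: DS_eq => s /=; rewrite scalerDl. Qed.
HB.instance Definition _ := GRing.Zmodule_isLmodule.Build R DS ds_scalerA ds_scale1r ds_scalerDr ds_scalerDl.

Lemma DS_valD (f g : DS) s : proj1_sig (f + g) s = proj1_sig f s + proj1_sig g s. Proof. by []. Qed.
Lemma DS_val0 s : proj1_sig (0 : DS) s = 0. Proof. by []. Qed.
Lemma DS_valZ r (f : DS) s : proj1_sig (r *: f) s = r *: proj1_sig f s. Proof. by []. Qed.
Lemma DS_valsum N (F : 'I_N -> DS) s :
  proj1_sig (\sum_(i < N) F i) s = \sum_(i < N) proj1_sig (F i) s.
Proof.
elim: N F => [|N IH] F; first by rewrite !big_ord0.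
by rewrite !big_ord_recr DS_valD IH.
Qed.

Lemma fsI n (m : M) : fsupp (fun k => if k == n then m else 0).
Proof.
exists n.+1 => k h; case: eqP => // e; by rewrite e ltnn in h.
Qed.
Definition dsI n (m : M) : DS := mkDS (fsI n m).
Lemma dsI_lin n : linear (dsI n).
Proof. move=> r x y; apply: DS_eq => s /=; case: eqP => //; by rewrite scaler0 addr0. Qed.
Definition iotaDS n : {linear M -> DS} := mkLin (dsI_lin n).
Lemma iotaDS_val n m k : proj1_sig (iotaDS n m) k = if k == n then m else 0.
Proof. by []. Qed.

Lemma sum_ind N (a : nat -> M) k :
  \sum_(i < N) (if k == (i : nat) then a (i : nat) else 0) = if (k < N)%N then a k else 0.
Proof.
elim: N => [|N IH]; first by rewrite big_ord0.
rewrite big_ord_recr /= IH.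
case: (eqVneq k N) => [->|ne]; first by rewrite ltnn ltnSn add0r.
by rewrite addr0 [(k < N.+1)%N]ltnS [(k <= N)%N]leq_eqVlt (negbTE ne).
Qed.

Lemma DS_sum_iota N (m : forall i : nat, M) k :
  proj1_sig (\sum_(i < N) iotaDS i (m i)) k = if (k < N)%N then m k else 0.
Proof.
rewrite DS_valsum.
transitivity (\sum_(i < N) (if k == (i : nat) then m (i : nat) else 0)).
  by apply: eq_bigr => i _; rewrite iotaDS_val.
by rewrite sum_ind.
Qed.

Lemma DS_direct : is_direct_sum (iotaDS : forall n, {linear (fun _ : nat => M) n -> DS}).

Proof.
split.
- move=> [x [N hx]]; exists N, x; apply: DS_eq => k; rewrite DS_sum_iota /=.
  by case: ltnP => // h; rewrite hx.
- move=> N m h i hi; move: (congr1 (fun f : DS => proj1_sig f i) h).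
  by rewrite /= DS_sum_iota hi.
Qed.
End DS.

Record subp (R : comPzRingType) (W : lmodType R) := Subp {
  sp : W -> Prop;
  sp0 : sp 0;
  spB : forall x y, sp x -> sp y -> sp (x - y);
  spZ : forall r x, sp x -> sp (r *: x) }.

Section SubM.
Variables (R : comPzRingType) (W : lmodType R) (Pb : subp W).
Let P := sp Pb.
Let P0 := sp0 Pb.
Let PB := @spB _ _ Pb.
Let PZ := @spZ _ _ Pb.
Definition SM := {x : W | sp Pb x}.
HB.instance Definition _ := hasDecEq.Build SM (@cl_eqP SM).
HB.instance Definition _ := hasChoice.Build SM (@cl_find1 SM) (@cl_find2 SM) (@cl_find3 SM).
Definition mkSM (x : W) (p : P x) : SM := exist P x p.
Lemma SM_eq (f g : SM) : proj1_sig f = proj1_sig g -> f = g.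
Proof. case: f g => f hf [g hg] /= e; subst; by rewrite (proof_irrelevance _ hf hg). Qed.
Lemma PN x : P x -> P (- x). Proof. by move=> h; rewrite -sub0r; apply: PB. Qed.
Lemma PD x y : P x -> P y -> P (x + y).
Proof. by move=> h1 /PN h2; rewrite -[y]opprK; apply: PB. Qed.
Definition sm0 : SM := mkSM P0.
Definition smadd (f g : SM) : SM := mkSM (PD (proj2_sig f) (proj2_sig g)).
Definition smopp (f : SM) : SM := mkSM (PN (proj2_sig f)).
Lemma sm_addA : associative smadd. Proof. by move=> a b c; apply: SM_eq => /=; rewrite addrA. Qed.
Lemma sm_addC : commutative smadd. Proof. by move=> a b; apply: SM_eq => /=; rewrite addrC. Qed.
Lemma sm_add0 : left_id sm0 smadd. Proof. by move=> a; apply: SM_eq => /=; rewrite add0r. Qed.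
Lemma sm_addN : left_inverse sm0 smopp smadd. Proof. by move=> a; apply: SM_eq => /=; rewrite addNr. Qed.
HB.instance Definition _ := GRing.isZmodule.Build SM sm_addA sm_addC sm_add0 sm_addN.
Definition smscale r (f : SM) : SM := mkSM (PZ r (proj2_sig f)).
Lemma sm_scalerA a b v : smscale a (smscale b v) = smscale (a * b) v.
Proof. by apply: SM_eq => /=; rewrite scalerA. Qed.
Lemma sm_scale1r : left_id 1 smscale. Proof. by move=> v; apply: SM_eq => /=; rewrite scale1r. Qed.
Lemma sm_scalerDr : right_distributive smscale +%R.
Proof. by move=> a u v; apply: SM_eq => /=; rewrite scalerDr. Qed.
Lemma sm_scalerDl v : {morph smscale^~ v: a b / a + b}.
Proof. by move=> a b; apply: SM_eq => /=; rewrite scalerDl. Qed.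
HB.instance Definition _ := GRing.Zmodule_isLmodule.Build R SM sm_scalerA sm_scale1r sm_scalerDr sm_scalerDl.
Lemma SM_valD (f g : SM) : proj1_sig (f + g) = proj1_sig f + proj1_sig g. Proof. by []. Qed.
Lemma SM_valZ r (f : SM) : proj1_sig (r *: f) = r *: proj1_sig f. Proof. by []. Qed.
Lemma sm_lin : linear (fun f : SM => proj1_sig f). Proof. by []. Qed.
Definition smincl : {linear SM -> W} := mkLin sm_lin.
Lemma smincl_inj : injective smincl. Proof. by move=> a b; rewrite !mkLinE; apply: SM_eq. Qed.
End SubM.

Lemma exq_nz (B : zmodType) (S : B -> Prop) (S0 : S 0)
  (SB : forall x y, S x -> S y -> S (x - y)) (b : B) : ~ S b ->
  exists q : QZ, q != 0 /\ forall k : int, S (b *~ k) -> q *~ k = 0.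
Proof.
move=> nSb.
pose G := fun p : B * QZ => S p.1 /\ p.2 = 0.
have gG : good G.
  split.
  - by move=> x u v [_ /= ->] [_ /= ->].
  - by split.
  - by move=> x y u v [h1 /= ->] [h2 /= ->]; split => //=; [apply: SB|rewrite subr0].
have Smz : forall x (k : int), S x -> S (x *~ k).
  by move=> x k h; have [] := @g_mulz _ _ G gG x 0 k (conj h erefl).
have Sopp : forall x, S x -> S (- x) by move=> x h; rewrite -sub0r; apply: SB.
have key : forall k : int, S (b *~ k) -> S (b *+ `|k|%N).
  move=> [] n h; first by rewrite pmulrn.
  by move: (Sopp _ h); rewrite NegzE mulrNz opprK -pmulrn.
case: (classic (exists n : nat, (0 < n)%N /\ S (b *+ n))) => [H|H].
- have [m [[m0 hm] hmin]] := ex_min_nat H.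
  have m1 : (1 < m)%N.
    rewrite ltn_neqAle m0 andbT; apply/negP => /eqP e; apply: nSb.
    by move: hm; rewrite -e mulr1n.
  have [q [qn hq]] := qz_tors m1.
  exists q; split => // k h.
  set j := (k %/ m)%Z; set r := (k %% m)%Z.
  have ek : k = j * m + r by apply: divz_eq.
  have hjm : S (b *~ (j * m)) by rewrite mulrC mulrzA -pmulrn; apply: Smz.
  have hr : S (b *~ r).
    have := SB _ _ h hjm; by rewrite {1}ek mulrzDr addrAC subrr add0r.
  have r0 : r = 0.
    have mz : (m%:Z != 0) by rewrite eqz_nat -lt0n.
    have rge : 0 <= r by apply: modz_ge0.
    have rlt : r < m by apply: ltz_pmod; rewrite ltz_nat.
    case: (posnP `|r|%N) => [/eqP|rp].
      by rewrite absz_eq0 => /eqP.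
    exfalso; apply: (hmin `|r|%N).
      by rewrite -ltz_nat gez0_abs.
    split => //; exact: key.
  by rewrite ek r0 addr0 mulrC mulrzA -pmulrn hq mul0rz.
- have [q [qn _]] := qz_tors (isT : (1 < 2)%N).
  exists q; split => // k h.
  case: (posnP `|k|%N) => [/eqP|kp].
    by rewrite absz_eq0 => /eqP ->; rewrite mulr0z.
  by exfalso; apply: H; exists `|k|%N; split => //; apply: key.
Qed.

Lemma chi_exists (B : zmodType) (S : B -> Prop) (S0 : S 0)
  (SB : forall x y, S x -> S y -> S (x - y)) (b : B) : ~ S b ->
  exists chi : B -> QZ, [/\ forall x y, chi (x + y) = chi x + chi y,
     forall x, S x -> chi x = 0 & chi b != 0].
Proof.
move=> nSb.
have [q [qn hq]] := exq_nz S0 SB nSb.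
pose G := fun p : B * QZ => S p.1 /\ p.2 = 0.
have gG : good G.
  split.
  - by move=> x u v [_ /= ->] [_ /= ->].
  - by split.
  - by move=> x y u v [h1 /= ->] [h2 /= ->]; split => //=; [apply: SB|rewrite subr0].
have cG : compat G b q by move=> k v [/= h ->]; rewrite hq.
have gG1 := ext_good gG cG.
have [F [Fa FX]] := extension qz_div gG1.
exists F; split => //.
  by move=> x h; apply: FX; apply: ext_sub.
by rewrite (FX _ _ (@ext_b _ _ G b q gG)).
Qed.

Section Chain.
Variables (R : comPzRingType) (J : R -> Prop).
Hypothesis hJ : is_ideal J.
Definition spnL (s : seq R) (x : R) := exists c : seq R,
  size c = size s /\ x = \sum_(i < size s) c`_i * s`_i.
Hypothesis nfg : forall s, ~ (forall x, J x <-> spnL s x).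

Definition pick (s : seq R) : R := epsilon (inhabits (0 : R)) (fun x => J x /\ ~ spnL s x).
Fixpoint xs n := match n with 0 => [::] | n.+1 => rcons (xs n) (pick (xs n)) end.
Definition xq n := pick (xs n).
Lemma size_xs n : size (xs n) = n.
Proof. by elim: n => //= n IH; rewrite size_rcons IH. Qed.
Lemma nth_xs n i : (i < n)%N -> (xs n)`_i = xq i.
Proof.
elim: n => // n IH h /=; rewrite nth_rcons size_xs.
case: ltnP => [h'|h']; first exact: IH.
have -> : i = n by apply/eqP; rewrite eqn_leq h'; rewrite ltnS in h; rewrite h.
by rewrite eqxx.
Qed.

Definition spn n x := exists c : nat -> R, x = \sum_(i < n) c i * xq i.

Lemma sum_size (s : seq R) (F : nat -> R) n : size s = n ->
  \sum_(i < size s) F i = \sum_(i < n) F i.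
Proof. by move=> <-. Qed.

Lemma spnL_spn n x : spnL (xs n) x <-> spn n x.
Proof.
split.
- move=> [c [hc ->]]; exists (fun i => c`_i).
  rewrite (@sum_size (xs n) (fun i => c`_i * (xs n)`_i) n (size_xs n)).
  by apply: eq_bigr => i _; rewrite nth_xs.
- move=> [c ->]; exists (mkseq c n); rewrite size_mkseq size_xs; split => //.
  by apply: eq_bigr => i _; rewrite nth_xs // nth_mkseq.
Qed.

Lemma spn0 n : spn n 0. Proof. by exists (fun _ => 0); rewrite big1 // => i _; rewrite mul0r. Qed.
Lemma spnB n x y : spn n x -> spn n y -> spn n (x - y).
Proof.
move=> [c ->] [c' ->]; exists (fun i => c i - c' i); rewrite -sumrB.
by apply: eq_bigr => i _; rewrite mulrBl.
Qed.
Lemma spnM n r x : spn n x -> spn n (r * x).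
Proof.
move=> [c ->]; exists (fun i => r * c i); rewrite mulr_sumr.
by apply: eq_bigr => i _; rewrite mulrA.
Qed.
Lemma spn_mono m n x : (m <= n)%N -> spn m x -> spn n x.
Proof.
move=> hmn [c ->]; exists (fun i => if (i < m)%N then c i else 0).
rewrite (big_ord_widen n (fun i => c i * xq i) hmn) big_mkcond.
by apply: eq_bigr => i _; case: ifP => _; rewrite ?mul0r.
Qed.
Lemma spn_xq n : spn n.+1 (xq n).
Proof.
exists (fun i => if i == n then 1 else 0); rewrite big_ord_recr /= eqxx mul1r.
rewrite big1 ?add0r // => i _; by rewrite (ltn_eqF (ltn_ord i)) mul0r.
Qed.

Lemma J0 : J 0. Proof. by case: hJ. Qed.
Lemma JD x y : J x -> J y -> J (x + y). Proof. by case: hJ => _ [h _]; apply: h. Qed.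
Lemma JM r x : J x -> J (r * x). Proof. by case: hJ => _ [_ h]; apply: h. Qed.

Lemma spn_J n x : (forall i, (i < n)%N -> J (xq i)) -> spn n x -> J x.
Proof.
move=> hn [c ->]; elim: n hn => [|n IH] hn; first by rewrite big_ord0; apply: J0.
rewrite big_ord_recr /=; apply: JD; first by apply: IH => i hi; apply: hn; apply: ltnW.
by apply: JM; apply: hn.
Qed.

Lemma xq_J n : forall i, (i < n)%N -> J (xq i).
Proof.
elim: n => // n IH i hi.
have ex : exists x, J x /\ ~ spnL (xs n) x.
  apply: NNPP => H; apply: (nfg (s := xs n)) => x; split.
    by move=> Jx; apply: NNPP => ns; apply: H; exists x.
  by move/spnL_spn; apply: spn_J.
have [h1 h2] := epsilon_spec (inhabits (0 : R)) (fun x => J x /\ ~ spnL (xs n) x) ex.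
rewrite ltnS leq_eqVlt in hi; case/orP: hi => [/eqP ->|hi]; first exact: h1.
exact: IH.
Qed.

Lemma xq_nspn n : ~ spn n (xq n).
Proof.
have ex : exists x, J x /\ ~ spnL (xs n) x.
  apply: NNPP => H; apply: (nfg (s := xs n)) => x; split.
    by move=> Jx; apply: NNPP => ns; apply: H; exists x.
  by move/spnL_spn; apply: spn_J; apply: xq_J.
have [h1 h2] := epsilon_spec (inhabits (0 : R)) (fun x => J x /\ ~ spnL (xs n) x) ex.
by move/spnL_spn.
Qed.
End Chain.

Lemma QZext : forall (B : zmodType) (X0 : B * QZ -> Prop), good X0 ->
  exists F : B -> QZ, (forall x y, F (x + y) = F x + F y) /\
                      (forall x u, X0 (x, u) -> F x = u).
Proof. by move=> B X0 g; apply: (@extension B QZ qz_div X0 g). Qed.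

Unset Implicit Arguments.
Theorem mainTheorem7 (R : comPzRingType) :
  (forall (M : nat -> lmodType R) (D : lmodType R)
          (iota : forall n, {linear M n -> D}),
      is_direct_sum iota ->
      (forall n, Gorenstein_injective (M n)) ->
      Gorenstein_injective D) ->
  noetherian_ring R.
Proof.
move=> Hyp; case: (classic (noetherian_ring R)) => // nN; exfalso.
have [J [hJ nfg]] : exists J : R -> Prop, is_ideal J /\ forall s, ~ (forall x, J x <-> spnL s x).
  case: (classic (exists J : R -> Prop, is_ideal J /\ forall s, ~ (forall x, J x <-> spnL s x))) => // H.
  exfalso; apply: nN; rewrite /noetherian_ring => J hJ; apply: NNPP => H2; apply: H.
  exists J; split => // s hs; apply: H2; exists s; exact: hs.
pose Eq := Hz R QZ.
have Einj : injective_module Eq := @Hz_injective R QZ QZext.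
have chiex : forall n, exists chi : R -> QZ, [/\ forall x y, chi (x + y) = chi x + chi y,
     forall x, spn J n x -> chi x = 0 & chi (xq J n) != 0].
  move=> n; apply: chi_exists; [exact: spn0|exact: spnB|exact: xq_nspn].
pose chi n := proj1_sig (constructive_indefinite_description _ (chiex n)).
have chiP : forall n, [/\ forall x y, chi n (x + y) = chi n x + chi n y,
     forall x, spn J n x -> chi n x = 0 & chi n (xq J n) != 0].
  by move=> n; exact: (proj2_sig (constructive_indefinite_description _ (chiex n))).
have eadd : forall n (x : R) s t, chi n ((s + t) * x) = chi n (s * x) + chi n (t * x).
  by move=> n x s t; rewrite mulrDl; case: (chiP n) => h _ _; apply: h.
pose e n (x : R) : Eq := @mkHz R QZ (fun s => chi n (s * x)) (eadd n x).
have elin : forall n r x y, e n (r * x + y) = r *: e n x + e n y.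
  move=> n r x y; apply: Hz_eq => s /=.
  by rewrite mulrDr mulrA; case: (chiP n) => h _ _; apply: h.
have ekill : forall n x, spn J n x -> e n x = 0.
  move=> n x hx; apply: Hz_eq => s /=; case: (chiP n) => _ h _; apply: h.
  exact: spnM.
have GD := Hyp (fun _ => Eq) (DS Eq) (@iotaDS R Eq) (DS_direct Eq) (fun _ => inj_GI Einj).
case: GD => I [d [Hinj [[Hcx Hex] [[phi [phi_inj phi_ker]] Hhom]]]].
have fl : forall m, linear (fun x : Eq => (phi (iotaDS Eq m x) : I (-1 + 1))).
  by move=> m r x y; rewrite !linearP.
have fz : forall m x, d (-1 + 1) (mkLin (fl m) x) = 0.
  by move=> m x; rewrite mkLinE; apply/(phi_ker _); exists (iotaDS Eq m x).
pose G m := proj1_sig (constructive_indefinite_description _ (Hhom Eq Einj (-1) (mkLin (fl m)) (fz m))).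
have GP : forall m x, d (-1) (G m x) = phi (iotaDS Eq m x).
  move=> m x; rewrite -[RHS](mkLinE (fl m)).
  exact: (proj2_sig (constructive_indefinite_description _ (Hhom Eq Einj (-1) (mkLin (fl m)) (fz m))) x).
pose Jp := fun x : R^o => exists n, spn J n x.
have Jp0 : Jp 0 by exists 0%N; exact: spn0.
have JpB : forall x y, Jp x -> Jp y -> Jp (x - y).
  move=> x y [n hn] [m hm]; exists (maxn n m); apply: spnB.
    by apply: spn_mono hn; apply: leq_maxl.
  by apply: spn_mono hm; apply: leq_maxr.
have JpZ : forall r x, Jp x -> Jp (r *: x) by move=> r x [n hn]; exists n; exact: spnM.
pose Pb := @Subp R R^o Jp Jp0 JpB JpZ.
pose A := SM Pb.
have Nex : forall a : A, exists n, spn J n (proj1_sig a) by move=> a; exact: (proj2_sig a).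
pose N a := proj1_sig (constructive_indefinite_description _ (Nex a)).
have NP : forall a, spn J (N a) (proj1_sig a).
  by move=> a; exact: (proj2_sig (constructive_indefinite_description _ (Nex a))).
pose S K x := \sum_(k < K) G k (e k x).
have Sext : forall n x, spn J n x -> forall t, S (n + t)%N x = S n x.
  move=> n x hx; elim => [|t IH]; first by rewrite addn0.
  rewrite /S addnS big_ord_recr /= -/(S _ _) IH ekill ?linear0 ?addr0 //.
  by apply: spn_mono hx; apply: leq_addr.
have Sany : forall n m x, spn J n x -> spn J m x -> S n x = S m x.
  move=> n m x hn hm; case: (leqP n m) => hnm.
    by rewrite -(subnKC hnm) Sext.
  by rewrite -(subnKC (ltnW hnm)) Sext.
pose F (a : A) := S (N a) (proj1_sig a).
have FK : forall a K, spn J K (proj1_sig a) -> F a = S K (proj1_sig a).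
  by move=> a K hK; apply: Sany.
have Flin : linear F.
  move=> r a b.
  pose K := maxn (N a) (maxn (N b) (N (r *: a + b))).
  have h1 : (N a <= K)%N by apply: leq_maxl.
  have h2 : (N b <= K)%N by apply: leq_trans (leq_maxl _ _) (leq_maxr _ _).
  have h3 : (N (r *: a + b)%R <= K)%N by apply: leq_trans (leq_maxr _ _) (leq_maxr _ _).
  rewrite (FK _ K (spn_mono h3 (NP _))) (FK a K (spn_mono h1 (NP _))) (FK b K (spn_mono h2 (NP _))).
  rewrite /S scaler_sumr -big_split; apply: eq_bigr => k _.
  have -> : proj1_sig (r *: a + b) = r * proj1_sig a + proj1_sig b by [].
  by rewrite elin linearP.
have [h hh] := Hinj (-1) A R^o (smincl Pb) (mkLin Flin) (@smincl_inj R R^o Pb).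
pose z := d (-1) (h 1).
have dz : d 0 z = 0 := Hcx (-1) (h 1).
have [del hdel] := (phi_ker z).1 dz.
have [N0 hN0] : fsupp (proj1_sig del) := proj2_sig del.
pose x := xq J N0.
have hx : Jp x by exists N0.+1; exact: spn_xq.
pose a : A := @mkSM R R^o Pb x hx.
have key : phi (x *: del) = phi (\sum_(k < N0.+1) iotaDS Eq k (e k x)).
  rewrite linearZ hdel /z -linearZ -linearZ.
  have -> : x *: (1 : R^o) = smincl Pb a by rewrite mkLinE; exact: (mulr1 x).
  rewrite hh mkLinE (FK a N0.+1 (spn_xq J N0)) /S linear_sum linear_sum.
  by apply: eq_bigr => k _; rewrite GP.
have e1 := phi_inj _ _ key.
have := congr1 (fun g : DS Eq => proj1_sig g N0) e1.
rewrite (@DS_sum_iota R Eq N0.+1 (fun k => e k x) N0) ltnSn DS_valZ (hN0 N0 (leqnn _)) scaler0 => e2.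
have := congr1 (fun g : Eq => proj1_sig g 1) e2.
rewrite /= mul1r => e3.
by case: (chiP N0) => _ _; rewrite -e3 eqxx.
Qed.
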